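(* Let $V$ be a finite-dimensional irreducible type $\mathbf 1$ representation of $U_qL\mathfrak g$, and let $v\in V\setminus\{0\}$. If $d^+(v)>0$, then there exists $i\in\hat I$ such that $E_i\cdot v\neq0$ and $d^+(E_i\cdot v)<d^+(v)$.
   Context: $\mathfrak g$ is a finite-dimensional complex simple Lie algebra with vertex set $I$, coroots $h_i$, weight lattice $P$, positive root cone $Q^+$; $\hat I=\{0\}\cup I$ is the vertex set of the untwisted affine Dynkin diagram with extended Cartan matrix $(a_{ij})$, symmetrizers $d_i$, $q_i=q^{d_i}$, $\mathbb F=\overline{\mathbb C(q)}$, $\delta=\sum_ia_i\alpha_i$ ($a_0=1$). $U_qL\mathfrak g$ is the $\mathbb F$-algebra generated by $E_i,F_i,K_i^{\pm1}$ ($i\in\hat I$) with the Drinfeld–Jimbo relations ($K_i$ commuting and invertible, $K_iE_jK_i^{-1}=q_i^{a_{ij}}E_j$, $K_iF_jK_i^{-1}=q_i^{-a_{ij}}F_j$, $[E_i,F_j]=\delta_{ij}(K_i-K_i^{-1})/(q_i-q_i^{-1})$, quantum Serre relations) and $\prod_iK_i^{a_i}=1$. Type $\mathbf 1$: the $K_i$ act semisimply with eigenvalues in $q^{\mathbb Z}$. Such $V$ decomposes as $V=\bigoplus_{\lambda\in P}V_\lambda$, $V_\lambda=\{v:K_iv=q_i^{\lambda(h_i)}v\ \forall i\in I\}$; $\mathrm{Supp}(V)=\{\lambda:V_\lambda\neq0\}$. Let $\lambda_0$ be the highest weight of $V$, i.e. the element of $\mathrm{Supp}(V)$ with $\mathrm{Supp}(V)\subset\lambda_0-Q^+$.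 Every $v\ne0$ is uniquely $v=\sum_{\lambda\in\mathrm{Supp}(v)}v_\lambda$ with $0\ne v_\lambda\in V_\lambda$. For $\lambda\in\mathrm{Supp}(V)$ and $0\neq v_\lambda\in V_\lambda$, $d^+(v_\lambda)$ is the minimal $\ell\in\mathbb Z_{\ge0}$ for which there is $(i_1,\dots,i_\ell)\in\hat I^\ell$ with $E_{i_1}\cdots E_{i_\ell}v_\lambda\in V_{\lambda_0}\setminus\{0\}$ (such $\ell$ exists); for general $v\neq0$, $d^+(v)=\min\{d^+(v_\lambda):\lambda\in\mathrm{Supp}(v)\}$. *)

(* Defs.v *)
From HB Require Import structures.
From mathcomp Require Import all_boot all_order all_algebra.
From mathcomp Require Import reals.
From mathcomp Require Import complex.
From Stdlib Require Import ClassicalEpsilon.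

Set Implicit Arguments.
Unset Strict Implicit.
Unset Printing Implicit Defensive.

Import Order.TTheory GRing.Theory Num.Theory.
Local Open Scope ring_scope.

(* C is modelled as R[i] for a realType R.  F is characterised up to   *)
(* isomorphism: an algebraically closed field with an embedding of C,  *)
(* an element q transcendental over C, and F algebraic over C(q).      *)
Definition is_closure_of_Cq (R : realType) (F : closedFieldType)
    (iota : {rmorphism R[i] -> F}) (q : F) : Prop :=
  (forall p : {poly R[i]}, p != 0 -> (map_poly iota p).[q] != 0) /\
  (forall x : F, exists P : {poly {poly R[i]}},
      P != 0 /\ (map_poly (fun c => (map_poly iota c).[q]) P).[x] = 0).

(* extension.  Convention: C i j = alpha_j(h_i).                       *)
Section Cartan.
Variable I : finType.

(* weights lambda in P, recorded by the values lambda(h_i), i in I *)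
Definition weight := {ffun I -> int}.

Variable C : I -> I -> int.
Variable d : I -> nat.

(* C is the Cartan matrix of a finite-dimensional complex simple Lie
   algebra (finite type, indecomposable), d are its (standard,
   coprime) symmetrizers: d_i C_ij = d_j C_ji. *)
Record finite_cartan : Prop := {
  fc_nonempty : exists i : I, True;
  fc_diag : forall i, C i i = 2;
  fc_offdiag : forall i j, i != j -> C i j <= 0;
  fc_dpos : forall i, (0 < d i)%N;
  fc_sym : forall i j, (d i)%:Z * C i j = (d j)%:Z * C j i;
  fc_posdef : forall x : {ffun I -> int}, x != 0 ->
      0 < \sum_i \sum_j x i * (d i)%:Z * C i j * x j;
  fc_indec : forall J : {set I}, J != set0 -> J != setT ->
      exists i j, [/\ i \in J, j \notin J & C i j != 0];
  fc_dnorm : exists i, d i = 1%N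
}.

(* pairing <beta, h_i> for beta in the root lattice, given by its
   coordinates on the simple roots *)
Definition pairing (b : {ffun I -> int}) (i : I) : int :=
  \sum_j b j * C i j.

Definition bil (b c : {ffun I -> int}) : int :=
  \sum_k \sum_l b k * c l * (d k)%:Z * C k l.

Definition sroot (i : I) : {ffun I -> int} := [ffun j => (i == j)%:Z].

(* the root system: Weyl-group orbit of the simple roots *)
Inductive is_root : {ffun I -> int} -> Prop :=
| root_simple i : is_root (sroot i)
| root_refl i b : is_root b ->
    is_root [ffun j => b j - pairing b i * (i == j)%:Z].

Definition highest_root (th : {ffun I -> int}) : Prop :=
  is_root th /\ forall b, is_root b -> forall j, b j <= th j.

Variable th : {ffun I -> int}.

(* hat I = {0} u I, with 0 represented by None *)
Definition Ihat := option I.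

(* extended Cartan matrix: a_ij = alpha_j(h_i), alpha_0 = delta - theta,
   h_0 = c - theta^vee *)
Definition acm (i j : Ihat) : int :=
  match i, j with
  | Some i, Some j => C i j
  | Some i, None => - pairing th i
  | None, Some j => - ((2 * bil th (sroot j)) %/ bil th th)%Z
  | None, None => 2
  end.

Definition dsym (i : Ihat) : nat :=
  match i with
  | Some i => d i
  | None => (absz (bil th th) %/ 2)%N
  end.

(* delta = sum_i a_i alpha_i, a_0 = 1, a_i = coefficient of theta *)
Definition mark (i : Ihat) : nat :=
  match i with
  | Some i => absz (th i)
  | None => 1%N
  end.

End Cartan.

Section QNum.
Variable F : fieldType.
Definition qint (x : F) (m : nat) : F := (x ^+ m - x ^- m) / (x - x^-1).
Definition qfact (x : F) (m : nat) : F := \prod_(1 <= k < m.+1) qint x k.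
Definition qbinom (x : F) (m r : nat) : F :=
  qfact x m / (qfact x r * qfact x (m - r)).
End QNum.

(* classical minimum of a set of naturals (0 if the set is empty; in
   the paper the relevant sets are always nonempty) *)
Definition nmin (P : nat -> Prop) : nat :=
  match excluded_middle_informative (exists m, P m) with
  | left _ => epsilon (inhabits 0%N)
                (fun m => P m /\ forall k, P k -> (m <= k)%N)
  | right _ => 0%N
  end.

(* Finite-dimensional representations of U_q L g on V = F^n (column   *)
(* vectors), given by the matrices of E_i, F_i, K_i, K_i^{-1}.         *)
Section Rep.
Variables (I : finType) (C : I -> I -> int) (d : I -> nat)
          (th : {ffun I -> int}).
Variables (F : fieldType) (q : F) (n : nat).
Variables (E Fo K Ki : Ihat I -> 'M[F]_n).

Local Notation a := (acm C d th).
Definition qi (i : Ihat I) : F := q ^+ dsym C d th i.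

(* Drinfeld-Jimbo relations of U_q L g (with prod K_i^{a_i} = 1) *)
Record ULg_rep : Prop := {
  rep_KKi : forall i, K i * Ki i = 1 /\ Ki i * K i = 1;
  rep_Kcomm : forall i j, K i * K j = K j * K i;
  rep_KE : forall i j, K i * E j * Ki i = qi i ^ a i j *: E j;
  rep_KF : forall i j, K i * Fo j * Ki i = qi i ^ (- a i j) *: Fo j;
  rep_EF : forall i j, E i * Fo j - Fo j * E i =
      if i == j then (qi i - (qi i)^-1)^-1 *: (K i - Ki i) else 0;
  rep_serreE : forall i j, i != j ->
      let m := absz (1 - a i j) in
      \sum_(r < m.+1) ((-1) ^+ r * qbinom (qi i) m r) *:
          (E i ^+ (m - r) * E j * E i ^+ r) = 0;
  rep_serreF : forall i j, i != j ->
      let m := absz (1 - a i j) in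
      \sum_(r < m.+1) ((-1) ^+ r * qbinom (qi i) m r) *:
          (Fo i ^+ (m - r) * Fo j * Fo i ^+ r) = 0;
  rep_central : \prod_(i : Ihat I) K i ^+ mark th i = 1
}.

(* type 1: each K_i acts semisimply with eigenvalues in q^Z *)
Definition type1 : Prop :=
  forall (i : Ihat I) (v : 'cV[F]_n), exists s : seq (int * 'cV[F]_n),
    v = \sum_(p <- s) p.2 /\
    forall p, p \in s -> K i *m p.2 = q ^ p.1 *: p.2.

Definition irreducible : Prop :=
  (0 < n)%N /\
  forall W : 'cV[F]_n -> Prop,
    W 0 -> (forall (c : F) x y, W x -> W y -> W (c *: x + y)) ->
    (forall i x, W x ->
        [/\ W (E i *m x), W (Fo i *m x), W (K i *m x) & W (Ki i *m x)]) ->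
    (forall x, W x -> x = 0) \/ (forall x, W x).

Definition in_wt (lam : weight I) (x : 'cV[F]_n) : Prop :=
  forall i : I, K (Some i) *m x = qi (Some i) ^ lam i *: x.

Definition in_supp (lam : weight I) : Prop :=
  exists x, x != 0 /\ in_wt lam x.

Definition in_Qplus_diff (lam0 mu : weight I) : Prop :=
  exists c : {ffun I -> nat}, forall i, lam0 i - mu i = \sum_j (c j)%:Z * C i j.

Definition is_highest_weight (lam0 : weight I) : Prop :=
  in_supp lam0 /\ forall mu, in_supp mu -> in_Qplus_diff lam0 mu.

Definition wdecomp (v : 'cV[F]_n) (s : seq (weight I * 'cV[F]_n)) : Prop :=
  [/\ uniq (map fst s),
      forall p, p \in s -> p.2 != 0 /\ in_wt p.1 p.2
    & v = \sum_(p <- s) p.2].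

(* the weight component v_lambda of v (0 if lambda is not in Supp(v)) *)
Definition wcomp (v : 'cV[F]_n) (lam : weight I) : 'cV[F]_n :=
  epsilon (inhabits 0) (fun x => exists s, wdecomp v s /\
     ((lam, x) \in s \/ (lam \notin map fst s /\ x = 0))).

(* E_{i_1} ... E_{i_l} x for s = [:: i_1; ...; i_l] *)
Definition Eword (s : seq (Ihat I)) (x : 'cV[F]_n) : 'cV[F]_n :=
  foldr (fun i y => E i *m y) x s.

Definition dplus_wt (lam0 : weight I) (x : 'cV[F]_n) : nat :=
  nmin (fun l => exists s : seq (Ihat I),
          [/\ size s = l, in_wt lam0 (Eword s x) & Eword s x != 0]).

Definition dplus (lam0 : weight I) (v : 'cV[F]_n) : nat :=
  nmin (fun l => exists lam, wcomp v lam != 0 /\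
                   dplus_wt lam0 (wcomp v lam) = l).

End Rep.

(* Main.v *)
Require Import Defs.
From HB Require Import structures.
From mathcomp Require Import all_boot all_order all_algebra.
From mathcomp Require Import reals.
From mathcomp Require Import complex.
From Stdlib Require Import ClassicalEpsilon Classical.

Set Implicit Arguments.
Unset Strict Implicit.
Unset Printing Implicit Defensive.
Import Order.TTheory GRing.Theory Num.Theory.
Local Open Scope ring_scope.

Lemma q_facts (R : realType) (F : closedFieldType) (iota : {rmorphism R[i] -> F}) (q : F) :
  is_closure_of_Cq iota q -> q != 0 /\ forall k, (0 < k)%N -> q ^+ k != 1.
Proof.
case=> H _; split.
  by have := H 'X; rewrite map_polyX hornerX polyX_eq0; apply.
move=> k k0.
have nz : ('X^k - 1 : {poly R[i]}) != 0.
  apply/eqP => h; have := congr1 (horner^~ 0) h.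
  rewrite /= hornerD hornerN hornerXn hornerC horner0 expr0n eqn0Ngt k0 /= sub0r.
  by move/eqP; rewrite oppr_eq0 oner_eq0.
have := H _ nz; rewrite rmorphB /= map_polyXn rmorph1 hornerD hornerN hornerXn hornerC.
by rewrite subr_eq0.
Qed.

Lemma qpow_inj (F : fieldType) (q : F) (e : nat) :
  q != 0 -> (forall k, (0 < k)%N -> q ^+ k != 1) -> (0 < e)%N ->
  forall a b : int, (q ^+ e) ^ a = (q ^+ e) ^ b -> a = b.
Proof.
move=> q0 qk e0 a b h.
set x := q ^+ e.
have x0 : x != 0 by rewrite expf_neq0.
have xk : forall k, (0 < k)%N -> x ^+ k != 1.
  by move=> k k0; rewrite /x -exprM qk // muln_gt0 e0.
have h1 : x ^ (a - b) = 1 by rewrite expfzDr // h -expfzDr // subrr expr0z.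
apply/eqP; rewrite -subr_eq0; move: (a - b) h1 => [[|k]|k] h1 //.
  by have := xk k.+1 isT; rewrite -h1 eqxx.
by have := xk k.+1 isT; move: h1 => /= /eqP; rewrite invr_eq1 => ->.
Qed.

Lemma nmin_ex (P : nat -> Prop) : (exists m, P m) ->
  P (nmin P) /\ forall k, P k -> (nmin P <= k)%N.
Proof.
move=> ex; rewrite /nmin; case: excluded_middle_informative => // _.
apply: (epsilon_spec (inhabits 0%N) (fun m => P m /\ forall k, P k -> (m <= k)%N)).
case: ex => m Pm.
suff: forall N m, (m <= N)%N -> P m -> exists m', P m' /\ (forall k, P k -> (m' <= k)%N).
  by move/(_ m m (leqnn m) Pm).
elim=> [|N IH] {}m hm {}Pm.
  by exists m; split=> // k _; rewrite leqn0 in hm; rewrite (eqP hm).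
case: (classic (exists k, P k /\ (k < m)%N)) => [[k [Pk km]]|nk].
  by apply: (IH k) => //; rewrite -ltnS (leq_trans km hm).
exists m; split=> // k Pk; rewrite leqNgt; apply/negP => km; apply nk; by exists k.
Qed.

Lemma nmin_pos (P : nat -> Prop) : (0 < nmin P)%N -> exists m, P m.
Proof. by rewrite /nmin; case: excluded_middle_informative. Qed.

Section Aux.
Variables (I : finType) (C : I -> I -> int) (d : I -> nat) (th : {ffun I -> int}).
Variables (F : fieldType) (q : F) (n : nat).
Variables (K : Ihat I -> 'M[F]_n).

Local Notation inw := (in_wt C d th q K).
Local Notation wdec := (wdecomp C d th q K).
Local Notation qj j := (qi C d th q (Some j)).

Definition comp (s : seq (weight I * 'cV[F]_n)) (lam : weight I) : 'cV[F]_n :=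
  \sum_(p <- s | p.1 == lam) p.2.

Lemma in_wt0 lam : inw lam 0.
Proof. by move=> i; rewrite mulmx0 scaler0. Qed.

Lemma in_wtD lam x y : inw lam x -> inw lam y -> inw lam (x + y).
Proof. by move=> hx hy i; rewrite mulmxDr hx hy scalerDr. Qed.

Lemma in_wtZ lam c x : inw lam x -> inw lam (c *: x).
Proof. by move=> hx i; rewrite -scalemxAr hx !scalerA mulrC. Qed.

Lemma in_wtB lam x y : inw lam x -> inw lam y -> inw lam (x - y).
Proof. by move=> hx hy; rewrite -scaleN1r; apply: in_wtD => //; apply: in_wtZ. Qed.

Lemma in_wt_sum (T : eqType) (r : seq T) (P : pred T) (g : T -> 'cV[F]_n) lam :
  (forall p, p \in r -> P p -> inw lam (g p)) -> inw lam (\sum_(p <- r | P p) g p).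
Proof.
move=> H; rewrite big_seq_cond; apply: (big_ind (inw lam)).
- exact: in_wt0.
- exact: in_wtD.
- by move=> p /andP[]; apply: H.
Qed.

Lemma comp_notin s lam : lam \notin map fst s -> comp s lam = 0.
Proof.
move=> H; rewrite /comp big_seq_cond big1 // => p /andP[ps /eqP e].
by case/negP: H; rewrite -e; apply: map_f.
Qed.

Lemma comp_in s lam x : uniq (map fst s) -> (lam, x) \in s -> comp s lam = x.
Proof.
elim: s => [//|p s IH] /= /andP[pn us]; rewrite in_cons => /orP[/eqP e|h];
  rewrite /comp big_cons.
  rewrite -e /=; case: eqP => [_|//]; rewrite -e in pn; have := comp_notin pn; rewrite /comp => ->; by rewrite addr0.
have hl : lam \in map fst s by apply: (map_f fst h).
case: eqP => [e'|_]; last exact: IH.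
by rewrite e' hl in pn.
Qed.

Lemma comp_sum s L : uniq L -> {subset map fst s <= L} ->
  \sum_(l <- L) comp s l = \sum_(p <- s) p.2.
Proof.
move=> uL sub; rewrite /comp.
under eq_bigr do rewrite big_mkcond.
rewrite exchange_big /=; apply: eq_big_seq => p ps.
rewrite (bigD1_seq p.1) //=; last by apply: sub; apply: map_f.
rewrite eqxx big1 ?addr0 // => l hl.
by rewrite eq_sym (negbTE hl).
Qed.

Hypothesis hq : forall j (a b : int), qj j ^ a = qj j ^ b -> a = b.

Definition fsc (l1 : weight I) (p : weight I * 'cV[F]_n) (mu : weight I) : F :=
  if [pick j | l1 j != p.1 j] is Some j then qj j ^ mu j - qj j ^ p.1 j else 1.

Definition Op (l1 : weight I) (p : weight I * 'cV[F]_n) : 'M[F]_n :=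
  if [pick j | l1 j != p.1 j] is Some j then K (Some j) - (qj j ^ p.1 j)%:M else 1%:M.

Definition Pop l1 (r : seq (weight I * 'cV[F]_n)) (x : 'cV[F]_n) :=
  foldr (fun p y => Op l1 p *m y) x r.

Lemma Opw l1 p mu x : inw mu x -> Op l1 p *m x = fsc l1 p mu *: x.
Proof.
move=> hx; rewrite /Op /fsc; case: pickP => [j _|_].
  by rewrite mulmxBl hx mul_scalar_mx scalerBl.
by rewrite mul1mx scale1r.
Qed.

Lemma Popw l1 r mu x : inw mu x -> Pop l1 r x = (\prod_(p <- r) fsc l1 p mu) *: x.
Proof.
move=> hx; elim: r => [|p r IHr] /=; first by rewrite big_nil scale1r.
by rewrite IHr -scalemxAr (Opw _ _ hx) scalerA big_cons mulrC.
Qed.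

Lemma Pop_sum l1 r (s : seq (weight I * 'cV[F]_n)) :
  Pop l1 r (\sum_(p <- s) p.2) = \sum_(p <- s) Pop l1 r p.2.
Proof.
elim: r => [//|p r IHr] /=.
by rewrite /Pop /= -/(Pop l1 r _) IHr mulmx_sumr.
Qed.

Lemma indep t : uniq (map fst t) -> (forall p, p \in t -> inw p.1 p.2) ->
  \sum_(p <- t) p.2 = 0 -> forall p, p \in t -> p.2 = 0.
Proof.
elim: t => [//|[l1 x1] t IH] /= /andP[nl ut] hw hs.
have hw' : forall p, p \in t -> inw p.1 p.2.
  by move=> p pt; apply: hw; rewrite in_cons pt orbT.
have f0 : forall p, p \in t -> fsc l1 p p.1 = 0.
  move=> p pt; rewrite /fsc; case: pickP => [j _|h]; first by rewrite subrr.
  have e : l1 = p.1 by apply/ffunP => j; by have := h j; move/negbFE/eqP.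
  by case/negP: nl; rewrite e; apply: map_f.
have f1 : \prod_(p <- t) fsc l1 p l1 != 0.
  rewrite prodf_seq_neq0; apply/allP => p pt /=; rewrite /fsc.
  case: pickP => [j hj|_]; last exact: oner_neq0.
  by rewrite subr_eq0; apply/eqP => /hq /eqP; apply/negP.
have Hs0 : \sum_(p <- t) Pop l1 t p.2 = 0.
  rewrite big_seq big1 // => p pt.
  by rewrite (Popw _ _ (hw' p pt)) (big_rem p pt) /= f0 // mul0r scale0r.
have := congr1 (Pop l1 t) hs.
rewrite Pop_sum big_cons /= (Popw _ _ (hw (l1, x1) (mem_head _ _))) Hs0 addr0 /Pop /= => /eqP.
have -> : foldr (fun p y => Op l1 p *m y) (0 : 'cV[F]_n) t = 0.
  by elim: t {IH nl ut hw hs hw' f0 f1 Hs0} => [|p t IHt] //=; rewrite IHt mulmx0.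
rewrite scaler_eq0 (negbTE f1) /= => /eqP x10.
have hs' : \sum_(p <- t) p.2 = 0 by move: hs; rewrite big_cons x10 add0r.
move=> p; rewrite in_cons => /orP[/eqP -> //|pt].
exact: IH.
Qed.

Lemma comp_uniq v s s' : wdec v s -> wdec v s' -> forall lam, comp s lam = comp s' lam.
Proof.
case=> us hs vs; case=> us' hs' vs' lam.
set L := undup (map fst s ++ map fst s').
have hL : forall l, l \in L -> comp s l - comp s' l = 0.
  move=> l lL.
  have := @indep [seq (l, comp s l - comp s' l) | l <- L] _ _ _ (l, comp s l - comp s' l).
  apply.
  - by rewrite -map_comp (eq_map (_ : fst \o _ =1 id)) // map_id undup_uniq.
  - move=> p /mapP[l' _ ->] /=; apply: in_wtB; apply: in_wt_sum => p' p's /eqP <-.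
      by case: (hs p' p's).
    by case: (hs' p' p's).
  - rewrite big_map sumrB !comp_sum ?undup_uniq // -?vs -?vs' ?subrr //.
      by move=> x xs; rewrite mem_undup mem_cat xs orbT.
    by move=> x xs; rewrite mem_undup mem_cat xs.
  - by apply: map_f.
case: (boolP (lam \in L)) => [lL|nL].
  by apply/eqP; rewrite -subr_eq0; apply/eqP; apply: hL.
rewrite !comp_notin //; apply: contra nL => h; by rewrite mem_undup mem_cat h ?orbT.
Qed.

Lemma wcompE v s lam : wdec v s -> wcomp C d th q K v lam = comp s lam.
Proof.
move=> hs; rewrite /wcomp.
have ex : exists x, exists s0, wdec v s0 /\
    ((lam, x) \in s0 \/ (lam \notin map fst s0 /\ x = 0)).
  case: (boolP (lam \in map fst s)) => h.
    case/mapP: h => p ps e; exists p.2, s; split => //; left.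
    by rewrite e -surjective_pairing.
  by exists 0, s; split => //; right.
case: (epsilon_spec (inhabits (0 : 'cV[F]_n)) _ ex) => s0 [hs0 [h|[h ->]]].
  rewrite (comp_uniq hs hs0); symmetry; apply: comp_in h; by case: hs0.
by rewrite (comp_uniq hs hs0) comp_notin.
Qed.

Lemma regroup s : (forall p, p \in s -> inw p.1 p.2) ->
  wdec (\sum_(p <- s) p.2)
       [seq (l, comp s l) | l <- undup (map fst s) & comp s l != 0].
Proof.
move=> hs; split.
- rewrite -map_comp (eq_map (_ : fst \o _ =1 id)) // map_id filter_uniq //.
  exact: undup_uniq.
- move=> p /mapP[l]; rewrite mem_filter => /andP[nz _] ->; split => //.
  by apply: in_wt_sum => p' p's /eqP <-; apply: hs.
- rewrite big_map big_filter big_mkcond /=.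
  rewrite -(comp_sum (L := undup (map fst s))) ?undup_uniq //; last first.
    by move=> x; rewrite mem_undup.
  rewrite [RHS]big_mkcond; apply: eq_bigr => l _; by case: eqP => [->|].
Qed.

End Aux.

Section Rep2.
Variables (I : finType) (C : I -> I -> int) (d : I -> nat) (th : {ffun I -> int}).
Variables (F : fieldType) (q : F) (n : nat).
Variables (E Fo K Ki : Ihat I -> 'M[F]_n).
Hypothesis rep : ULg_rep C d th q E Fo K Ki.
Hypothesis q0 : q != 0.

Local Notation inw := (in_wt C d th q K).
Local Notation qj j := (qi C d th q (Some j)).

Lemma conj_wt (A : 'M[F]_n) (c : {ffun I -> int}) lam x :
  (forall j, K (Some j) * A * Ki (Some j) = qj j ^ c j *: A) ->
  inw lam x -> inw (lam + c) (A *m x).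
Proof.
move=> hA hx j.
have e : K (Some j) *m A = (qj j ^ c j *: A) *m K (Some j).
  rewrite -hA !mulmxE -mulrA (proj2 (rep_KKi rep _)) mulr1 //.
rewrite !ffunE mulmxA e -mulmxA hx -scalemxAl -scalemxAr scalerA expfzDr.
  by rewrite mulrC.
by rewrite /qi expf_neq0.
Qed.

Lemma comm_wt (A : 'M[F]_n) lam x :
  (forall j, K (Some j) * A = A * K (Some j)) ->
  inw lam x -> inw lam (A *m x).
Proof.
move=> hA hx j.
by rewrite mulmxA mulmxE hA -mulmxE -mulmxA hx -scalemxAr.
Qed.

Lemma Ki_comm i j : Ki i * K j = K j * Ki i.
Proof.
have [h1 h2] := rep_KKi rep i.
rewrite -[Ki i * K j]mulr1 -h1 !mulrA -(mulrA (Ki i) (K j) (K i)).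
by rewrite (rep_Kcomm rep j i) mulrA h2 mul1r.
Qed.

Definition al (i : Ihat I) : {ffun I -> int} := [ffun j => acm C d th (Some j) i].
Definition alF (i : Ihat I) : {ffun I -> int} := [ffun j => - acm C d th (Some j) i].

Lemma E_wt i lam x : inw lam x -> inw (lam + al i) (E i *m x).
Proof. by apply: conj_wt => j; rewrite ffunE (rep_KE rep). Qed.

Lemma F_wt i lam x : inw lam x -> inw (lam + alF i) (Fo i *m x).
Proof. by apply: conj_wt => j; rewrite ffunE (rep_KF rep). Qed.

Lemma K_wt i lam x : inw lam x -> inw lam (K i *m x).
Proof. by apply: comm_wt => j; rewrite (rep_Kcomm rep). Qed.

Lemma Ki_wt i lam x : inw lam x -> inw lam (Ki i *m x).
Proof. by apply: comm_wt => j; rewrite Ki_comm. Qed.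

End Rep2.

Lemma Eword0 (I : finType) (F : fieldType) (n : nat) (E : Ihat I -> 'M[F]_n) s :
  foldr (fun i y => E i *m y) (0 : 'cV[F]_n) s = 0.
Proof. by elim: s => [|i s IH] //=; rewrite IH mulmx0. Qed.

Theorem lemma6p8
  (R : realType) (F : closedFieldType) (iota : {rmorphism R[i] -> F}) (q : F)
  (I : finType) (C : I -> I -> int) (d : I -> nat) (th : {ffun I -> int})
  (n : nat) (E Fo K Ki : Ihat I -> 'M[F]_n)
  (lam0 : weight I) (v : 'cV[F]_n) :
  is_closure_of_Cq iota q ->
  finite_cartan C d ->
  highest_root C th ->
  ULg_rep C d th q E Fo K Ki ->
  type1 q K ->
  irreducible E Fo K Ki ->
  is_highest_weight C d th q K lam0 ->
  v != 0 ->
  (0 < dplus C d th q E K lam0 v)%N ->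
  exists i : Ihat I,
    E i *m v != 0 /\
    (dplus C d th q E K lam0 (E i *m v) < dplus C d th q E K lam0 v)%N.
Proof.
move=> Hq Hfc Hhr rep _ irr hw nv hpos.
have [q0 qk] := q_facts Hq.
have hq : forall j (a b : int), qi C d th q (Some j) ^ a = qi C d th q (Some j) ^ b -> a = b.
  move=> j a b; apply: qpow_inj => //; exact: (fc_dpos Hfc).
pose W (x : 'cV[F]_n) := exists s : seq (weight I * 'cV[F]_n),
  (forall p, p \in s -> in_wt C d th q K p.1 p.2) /\ x = \sum_(p <- s) p.2.
have allW : forall x, W x.
  case: irr => _ Hirr.
  case: (Hirr W) => [||||//].
  - by exists [::]; split => //; rewrite big_nil.
  - move=> c x y [sx [hx ->]] [sy [hy ->]].
    exists ([seq (p.1, c *: p.2) | p <- sx] ++ sy); split.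
      move=> p; rewrite mem_cat => /orP[/mapP[p' p's ->]|]; last exact: hy.
      by apply: in_wtZ; apply: hx.
    by rewrite big_cat big_map scaler_sumr.
  - move=> i x [s [hs ->]]; split.
    + exists [seq (p.1 + al C d th i, E i *m p.2) | p <- s]; split.
        by move=> p /mapP[p' p's ->]; apply: (E_wt rep q0); apply: hs.
      by rewrite big_map mulmx_sumr.
    + exists [seq (p.1 + alF C d th i, Fo i *m p.2) | p <- s]; split.
        by move=> p /mapP[p' p's ->]; apply: (F_wt rep q0); apply: hs.
      by rewrite big_map mulmx_sumr.
    + exists [seq (p.1, K i *m p.2) | p <- s]; split.
        by move=> p /mapP[p' p's ->]; apply: (K_wt rep); apply: hs.
      by rewrite big_map mulmx_sumr.
    + exists [seq (p.1, Ki i *m p.2) | p <- s]; split.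
        by move=> p /mapP[p' p's ->]; apply: (Ki_wt rep); apply: hs.
      by rewrite big_map mulmx_sumr.
  - move=> h; case: hw => [[x0 [nx0 wx0]] _].
    have : W x0.
      exists [:: (lam0, x0)]; split; last by rewrite big_seq1.
      by move=> p; rewrite inE => /eqP ->.
    by move/h => e; rewrite e eqxx in nx0.
have dec : forall x, exists s, wdecomp C d th q K x s.
  move=> x; case: (allW x) => s [hs ->].
  by eexists; apply: regroup hs.
move: hpos; rewrite /dplus => hpos.
have [[lam [nzl el]] _] := nmin_ex (nmin_pos hpos).
set xl := wcomp C d th q K v lam in nzl el.
have hpos' : (0 < dplus_wt C d th q E K lam0 xl)%N by rewrite el.
move: (hpos'); rewrite /dplus_wt => hpos''.
have [[s0 [sz w0 nz0]] _] := nmin_ex (nmin_pos hpos'').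
move: sz w0 nz0; case/lastP: s0 => [|s1 i] sz w0 nz0.
  by move: hpos''; rewrite -sz.
rewrite /Eword foldr_rcons in w0 nz0.
exists i.
case: (dec v) => s hs.
set t := [seq (p.1 + al C d th i, E i *m p.2) | p <- s & E i *m p.2 != 0].
have ht : wdecomp C d th q K (E i *m v) t.
  case: hs => us hs vs; split.
  - rewrite -map_comp (map_comp (fun l => l + al C d th i) fst).
    rewrite map_inj_uniq; last exact: addIr.
    apply: subseq_uniq us; apply: map_subseq; exact: filter_subseq.
  - move=> p /mapP[p']; rewrite mem_filter => /andP[nz p's] -> /=; split => //.
    by apply: (E_wt rep q0); case: (hs p' p's).
  - rewrite vs mulmx_sumr big_map big_filter [RHS]big_mkcond /=.
    by apply: eq_bigr => p _; case: eqP => [->|].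
have hc : wcomp C d th q K (E i *m v) (lam + al C d th i) = E i *m xl.
  rewrite (wcompE hq _ ht) /xl (wcompE hq _ hs) /comp big_map big_filter_cond mulmx_sumr.
  rewrite [RHS]big_mkcond [LHS]big_mkcond; apply: eq_bigr => p _ /=.
  rewrite (inj_eq (addIr _)); case: (p.1 == lam); rewrite ?andbT ?andbF //.
  by case: eqP => [->|].
have ny : E i *m xl != 0.
  by apply: contra nz0 => /eqP ->; rewrite Eword0.
split.
  apply: contra ny => /eqP h; rewrite -hc h.
  have h0 : wdecomp C d th q K 0 [::] by split => //; rewrite big_nil.
  by rewrite (wcompE hq _ h0) /comp big_nil.
rewrite -el.
have ex2 : exists m, exists mu, wcomp C d th q K (E i *m v) mu != 0 /\
    dplus_wt C d th q E K lam0 (wcomp C d th q K (E i *m v) mu) = m.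
  by exists (dplus_wt C d th q E K lam0 (E i *m xl)), (lam + al C d th i); rewrite hc.
apply: (leq_ltn_trans ((nmin_ex ex2).2 _ _)); first by exists (lam + al C d th i); rewrite hc.
rewrite /dplus_wt.
apply: (leq_ltn_trans ((nmin_ex _).2 (size s1) _));
  try by [exists (size s1), s1 | exists s1; split].
by rewrite -sz size_rcons.
Qed.
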